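(* For every integer $n\ge0$ let $\mathcal Q_n$ be the complex vector space of polynomials $q(\xi_1,\ldots,\xi_n|\eta_1,\ldots,\eta_n)$ that are homogeneous of weighted degree $n$ (the variables $\xi_i,\eta_i$ having weight $i$) such that the polynomials $$Q_{N,M}(X|Z)=q\bigl(S_1(X),\ldots,S_n(X)\,\big|\,S_1(Z),\ldots,S_n(Z)\bigr),\qquad X=(x_1,\ldots,x_N),\ Z=(z_1,\ldots,z_M),$$ where $S_r$ denotes the $r$-th power sum, satisfy for all integers $N,M\ge0$ the chain equation $$Q_{N+2,M+1}(X,x,-x\,|\,Z,ix)=Q_{N,M}(X|Z)$$ identically in all variables. Then $$\sum_{n=0}^\infty q^n\dim\mathcal Q_n=\prod_{k=1}^\infty\frac1{1-q^k}.$$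
   Context: Such polynomials $Q_{N,M}$ are automatically symmetric in $X$ and in $Z$ separately; they parametrize (in the kink sector of the sine-Gordon model) form factors of chiral descendant operators. *)

(* Defs.v *)
From HB Require Import structures.
From mathcomp Require Import all_boot all_order all_algebra.
From mathcomp Require Import mpoly.
Set Implicit Arguments. Unset Strict Implicit. Unset Printing Implicit Defensive.
Import Order.TTheory GRing.Theory Num.Theory.
Local Open Scope ring_scope.

(* Variables of q in Q_n: 'X_j for j : 'I_(n + n);
   j = lshift n i  is  xi_(i+1),   j = rshift n i  is  eta_(i+1). *)
Definition var_weight (n : nat) (j : 'I_(n + n)) : nat :=
  match split j with inl i => (i : nat).+1 | inr i => (i : nat).+1 end.

Definition wdeg (n : nat) (m : 'X_{1..n + n}) : nat :=
  (\sum_(j < n + n) var_weight j * m j)%N.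

Definition whomog (R : nzRingType) (n d : nat) (q : {mpoly R[n + n]}) : Prop :=
  forall m, m \in msupp q -> wdeg m = d.

Definition psum (R : nzRingType) (r : nat) (s : seq R) : R := \sum_(a <- s) a ^+ r.

Definition psum_point (R : nzRingType) (n : nat) (X Z : seq R) : 'I_(n + n) -> R :=
  fun j => match split j with
           | inl i => psum (i : nat).+1 X
           | inr i => psum (i : nat).+1 Z end.

Definition QNM (R : comNzRingType) (n : nat) (q : {mpoly R[n + n]}) (X Z : seq R) : R :=
  q.@[@psum_point R n X Z].

(* membership in the space Q_n (over a field C containing i = sqrt(-1));
   X, Z range over all finite tuples, i.e. all N, M >= 0 *)
Definition in_Qn (C : numClosedFieldType) (n : nat) (q : {mpoly C[n + n]}) : Prop :=
  @whomog C n n q /\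
  forall (X Z : seq C) (x : C),
    QNM q (X ++ [:: x; - x]) (Z ++ [:: 'i * x]) = QNM q X Z.

Definition has_dim (C : fieldType) (V : lmodType C) (P : V -> Prop) (d : nat) : Prop :=
  exists b : 'I_d -> V,
    (forall k, P (b k)) /\
    (forall c : 'I_d -> C, \sum_(k < d) c k *: b k = 0 -> forall k, c k = 0) /\
    (forall v, P v -> exists c : 'I_d -> C, v = \sum_(k < d) c k *: b k).

(* coefficient of q^n in prod_{k>=1} 1/(1-q^k); only factors k <= n and
   terms q^(k j) with j <= n can contribute, so this is the exact coefficient *)
Definition gen_coef (n : nat) : int :=
  (\prod_(1 <= k < n.+1) \sum_(j < n.+1) ('X^(k * j) : {poly int}))`_n.

(* Main.v *)
Require Import Defs.
From HB Require Import structures.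
From mathcomp Require Import all_boot all_order all_algebra.
From mathcomp Require Import mpoly.
From mathcomp Require Import cyclic separable cyclotomic.
From mathcomp Require Import ring.
Set Warnings "-notation-overridden -ambiguous-paths -notation-incompatible-prefix".
Import Order.TTheory GRing.Theory Num.Theory.
Local Open Scope ring_scope.
Set Implicit Arguments. Unset Strict Implicit. Unset Printing Implicit Defensive.

Section Homw.
Variables (R : nzRingType) (k : nat) (w : 'I_k -> nat).

Definition wdg (m : 'X_{1..k}) : nat := (\sum_(j < k) w j * m j)%N.
Definition homw (p : {mpoly R[k]}) (d : nat) : Prop :=
  forall m, m \in msupp p -> wdg m = d.

Lemma wdgD m1 m2 : wdg (m1 + m2)%MM = (wdg m1 + wdg m2)%N.
Proof. by rewrite /wdg -big_split /=; apply: eq_bigr => j _; rewrite mnmDE mulnDr. Qed.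

Lemma wdg0 : wdg 0%MM = 0%N.
Proof. by rewrite /wdg big1 // => j _; rewrite mnm0E muln0. Qed.

Lemma wdgU i : wdg U_(i)%MM = w i.
Proof.
rewrite /wdg (bigD1 i) //= mnm1E eqxx muln1 big1 ?addn0 // => j /negbTE ji.
by rewrite mnm1E eq_sym ji muln0.
Qed.

Lemma homw0 d : homw 0 d.
Proof. by move=> m; rewrite msupp0. Qed.

Lemma homw1 : homw 1 0.
Proof. by move=> m; rewrite msupp1 inE => /eqP ->; exact: wdg0. Qed.

Lemma homwX i : homw 'X_i (w i).
Proof. by move=> m; rewrite msuppX inE => /eqP ->; exact: wdgU. Qed.

Lemma homwM p q d1 d2 : homw p d1 -> homw q d2 -> homw (p * q) (d1 + d2).
Proof.
move=> hp hq m /msuppM_le /allpairsP [[m1 m2] /= [h1 h2 ->]].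
by rewrite wdgD hp // hq.
Qed.

Lemma homwD p q d : homw p d -> homw q d -> homw (p + q) d.
Proof. by move=> hp hq m /msuppD_le; rewrite mem_cat => /orP [/hp|/hq]. Qed.

Lemma homwZ c p d : homw p d -> homw (c *: p) d.
Proof. by move=> hp m /msuppZ_le /hp. Qed.

Lemma homwN p d : homw p d -> homw (- p) d.
Proof. by move=> hp m; rewrite (perm_mem (msuppN p)) => /hp. Qed.

Lemma homwB p q d : homw p d -> homw q d -> homw (p - q) d.
Proof. by move=> hp hq; apply: homwD => //; apply: homwN. Qed.

Lemma homwXn p d e : homw p d -> homw (p ^+ e) (e * d).
Proof.
move=> hp; elim: e => [|e IH]; first by rewrite expr0 mul0n; exact: homw1.
by rewrite exprS mulSn; apply: homwM.
Qed.

Lemma homw_prod (I : Type) (r : seq I) (F : I -> {mpoly R[k]}) (D : I -> nat) :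
  (forall i, homw (F i) (D i)) -> homw (\prod_(i <- r) F i) (\sum_(i <- r) D i).
Proof.
move=> h; elim: r => [|a r IH]; first by rewrite !big_nil; exact: homw1.
by rewrite !big_cons; apply: homwM.
Qed.

Lemma homw_sum (I : eqType) (r : seq I) (F : I -> {mpoly R[k]}) d :
  (forall i, i \in r -> homw (F i) d) -> homw (\sum_(i <- r) F i) d.
Proof.
elim: r => [|a r IH] h; first by rewrite big_nil; exact: homw0.
rewrite big_cons; apply: homwD; first by apply: h; rewrite inE eqxx.
by apply: IH => i hi; apply: h; rewrite inE hi orbT.
Qed.

End Homw.

Section Zero.
Variable C : numDomainType.

Definition extv k (y : 'I_k -> C) (t : C) : 'I_k.+1 -> C :=
  fun i => if insub (val i) is Some j then y j else t.
Definition restm k (m : 'X_{1..k.+1}) : 'X_{1..k} := [multinom m (widen_ord (leqnSn k) i) | i < k].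

Lemma restm_inj k (m1 m2 : 'X_{1..k.+1}) :
  restm m1 = restm m2 -> m1 ord_max = m2 ord_max -> m1 = m2.
Proof.
move=> hr hm; apply/mnmP => i; case: (unliftP ord_max i) => [j ->|-> //].
have -> : lift ord_max j = widen_ord (leqnSn k) j by apply: val_inj; rewrite /= /bump leqNgt ltn_ord.
by have := congr1 (fun m : 'X_{1..k} => m j) hr; rewrite /restm !mnmE.
Qed.

Lemma zero_mpoly k (p : {mpoly C[k]}) : (forall y, p.@[y] = 0) -> p = 0.
Proof.
elim: k p => [|k IH] p H.
  apply/mpolyP => m; rewrite mcoeff0.
  case: (boolP (m \in msupp p)) => [hm|/memN_msupp_eq0 //].
  have := H (fun _ => 0); rewrite mevalE.
  have : uniq (msupp p) := msupp_uniq p.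
  move: hm; case: (msupp p) => [|a [|b t]] //=.
    rewrite inE => /eqP <- _; rewrite big_cons big_nil big_ord0 mulr1 addr0 //.
  by move=> _; rewrite (nvar0_mnmE a) (nvar0_mnmE b) inE eqxx.
pose Py (y : 'I_k -> C) : {poly C} :=
  \sum_(m <- msupp p) (p@_m * \prod_(i < k) y i ^+ m (widen_ord (leqnSn k) i)) *: 'X^(m ord_max).
pose Qj (j : nat) : {mpoly C[k]} :=
  \sum_(m <- msupp p | m ord_max == j) p@_m *: 'X_[restm m].
have F1 y t : (Py y).[t] = p.@[extv y t].
  rewrite mevalE horner_sum; apply: eq_bigr => m _.
  rewrite hornerZ hornerXn big_ord_recr /= -mulrA; congr (_ * (_ * _)).
    apply: eq_bigr => i _; rewrite /extv /=.
    by have -> : insub (val i) = Some i by exact: valK.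
  by rewrite /extv insubF //= ltnn.
have F2 y j : (Py y)`_j = (Qj j).@[y].
  rewrite coef_sum raddf_sum /= [RHS]big_mkcond /=; apply: eq_bigr => m _.
  rewrite coefZ coefXn eq_sym; case: eqP => [e|ne]; last by rewrite mulr0.
  by rewrite mulr1 mevalZ mevalX; congr (_ * _); apply: eq_bigr => i _; rewrite mnmE.
have F3 m0 : m0 \in msupp p -> (Qj (m0 ord_max))@_(restm m0) = p@_m0.
  move=> hm; rewrite /Qj raddf_sum /= big_mkcond /= (bigD1_seq m0) ?msupp_uniq //=.
  rewrite eqxx mcoeffZ mcoeffX eqxx mulr1 big1 ?addr0 // => m /negbTE ne.
  case: eqP => // e; rewrite mcoeffZ mcoeffX; case: eqP => [e2|]; last by rewrite mulr0.
  by rewrite (restm_inj e2 e) eqxx in ne.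
have hPy y : Py y = 0.
  apply/eqP; apply: contraT => nz.
  have := max_poly_roots nz (rs := [seq (i%:R : C) | i <- iota 0 (size (Py y))]).
  rewrite size_map size_iota ltnn; apply.
    by apply/allP => t _; rewrite /root F1 H.
  by rewrite map_inj_uniq ?iota_uniq // => a b /eqP; rewrite eqr_nat => /eqP.
apply/mpolyP => m0; rewrite mcoeff0.
case: (boolP (m0 \in msupp p)) => [hm|/memN_msupp_eq0 //].
rewrite -(F3 _ hm) (IH (Qj (m0 ord_max))) ?mcoeff0 // => y.
by rewrite -F2 hPy coef0.
Qed.
End Zero.

Section Surj.
Variable C : numClosedFieldType.

Lemma prim_exists N : (N > 0)%N -> exists z : C, N.-primitive_root z.
Proof.
pose p : {poly C} := 'X^N - 1; have [r Dp] := closed_field_poly_normal p.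
move=> n_gt0; rewrite (monicP _) ?monicXnsubC // scale1r in Dp.
have rn1: all N.-unity_root r by apply/allP=> z; rewrite -root_prod_XsubC -Dp.
have sz_r: (N < (size r).+1)%N.
  by rewrite -(size_prod_XsubC r id) -Dp size_XnsubC.
have [|z] := hasP (has_prim_root n_gt0 rn1 _ sz_r); last by exists z.
by rewrite -separable_prod_XsubC -Dp separable_Xn_sub_1 // pnatr_eq0 -lt0n.
Qed.

Lemma geom (z : C) m : (z - 1) * \sum_(j < m) z ^+ j = z ^+ m - 1.
Proof.
elim: m => [|m IH]; first by rewrite big_ord0 mulr0 expr0 subrr.
by rewrite big_ord_recr /= mulrDr IH exprS; ring.
Qed.

Lemma psum_cat k (s1 s2 : seq C) : psum k (s1 ++ s2) = psum k s1 + psum k s2.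
Proof. by rewrite /psum big_cat. Qed.

Lemma psum_surj N (s : nat -> C) :
  exists X : seq C, forall k, (0 < k <= N)%N -> psum k X = s k.
Proof.
elim: N => [|N [X HX]]; first by exists [::] => k; rewrite andbC leqn0 => /andP[/eqP ->].
have [z pz] := prim_exists (ltn0Sn N).
pose c := (s N.+1 - psum N.+1 X) / N.+1%:R.
pose a := N.+1.-root c.
pose G := [seq a * z ^+ j | j <- iota 0 N.+1].
have hG k : psum k G = a ^+ k * \sum_(j < N.+1) (z ^+ k) ^+ j.
  rewrite /psum big_map -[iota 0 N.+1]/(index_iota 0 N.+1) big_mkord mulr_sumr; apply: eq_bigr => j _.
  by rewrite exprMn -!exprM mulnC.
have nz : N.+1%:R != 0 :> C by rewrite pnatr_eq0.
exists (X ++ G) => k /andP [k0 kN]; rewrite psum_cat hG.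
case: (ltnP k N.+1) => kN1.
  have hz : z ^+ k != 1 by rewrite -(prim_order_dvd pz); apply/negP => /(dvdn_leq k0); rewrite leqNgt kN1.
  have : (z ^+ k - 1) * \sum_(j < N.+1) (z ^+ k) ^+ j = 0.
    by rewrite geom -exprM mulnC exprM (prim_expr_order pz) expr1n subrr.
  move/eqP; rewrite mulf_eq0 subr_eq0 (negbTE hz) /= => /eqP ->.
  by rewrite mulr0 addr0 HX // k0.
have -> : k = N.+1 by apply/eqP; rewrite eqn_leq kN kN1.
rewrite (prim_expr_order pz) (eq_bigr (fun _ => 1)) => [|j _]; last by rewrite expr1n.
rewrite sumr_const card_ord rootCK // /c -mulr_natr mul1r divfK //; ring.
Qed.
End Surj.

Unset Implicit Arguments.
Section Main.
Variables (C : numClosedFieldType) (n : nat).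

Definition ci (r : 'I_n) : C := 'i ^+ r.+1.
Definition ei (r : 'I_n) : C := 1 + (-1) ^+ r.+1.
Definition Lr (r : 'I_n) : {mpoly C[n + n]} :=
  ci r *: 'X_(lshift n r) - ei r *: 'X_(rshift n r).
Definition Lt : n.-tuple {mpoly C[n + n]} := [tuple Lr r | r < n].
Definition psi : (n + n).-tuple {mpoly C[n]} :=
  [tuple match split j with inl r => (ci r)^-1 *: 'X_r | inr _ => 0 end | j < n + n].

Lemma ci_neq0 r : ci r != 0.
Proof. by rewrite expf_neq0 // neq0Ci. Qed.

Lemma split_l (r : 'I_n) : split (lshift n r) = inl r.
Proof. exact: (unsplitK (inl _ r)). Qed.
Lemma split_r (r : 'I_n) : split (rshift n r) = inr r.
Proof. exact: (unsplitK (inr _ r)). Qed.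

Lemma vw_l r : var_weight (lshift n r) = r.+1.
Proof. by rewrite /var_weight split_l. Qed.
Lemma vw_r r : var_weight (rshift n r) = r.+1.
Proof. by rewrite /var_weight split_r. Qed.

Lemma homw_L r : homw (@var_weight n) (Lr r) r.+1.
Proof.
apply: homwB; apply: homwZ.
  by have := @homwX _ _ (@var_weight n) (lshift n r); rewrite vw_l.
by have := @homwX _ _ (@var_weight n) (rshift n r); rewrite vw_r.
Qed.

Definition T := {ffun 'I_n -> 'I_n.+1}.
Definition Ap : pred T := fun f => (\sum_(i < n) i.+1 * f i == n)%N.
Definition mon (f : T) : 'X_{1..n} := [multinom (f i : nat) | i < n].
Definition bf (f : T) : {mpoly C[n + n]} := \prod_(i < n) Lr i ^+ f i.

Lemma mon_inj : injective mon.
Proof.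
move=> f g e; apply/ffunP => i; apply: val_inj.
by have := congr1 (fun m : 'X_{1..n} => m i) e; rewrite /mon !mnmE.
Qed.

Lemma bf_homog f : f \in Ap -> whomog n (bf f).
Proof.
move=> hf; have := @homw_prod _ _ _ _ (index_enum 'I_n) _ _ (fun i => homwXn (e:=f i) (homw_L i)).
rewrite /whomog /bf; suff -> : (\sum_(i <- index_enum 'I_n) f i * i.+1)%N = n by [].
by rewrite -[RHS](eqP hf); apply: eq_bigr => i _; rewrite mulnC.
Qed.

Lemma Lr_eval r (y : 'I_(n + n) -> C) :
  (Lr r).@[y] = ci r * y (lshift n r) - ei r * y (rshift n r).
Proof. by rewrite mevalB !mevalZ !mevalXU. Qed.

Lemma bf_chain f X Z (x : C) :
  QNM (bf f) (X ++ [:: x; - x]) (Z ++ [:: 'i * x]) = QNM (bf f) X Z.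
Proof.
rewrite /QNM /bf !rmorph_prod; apply: eq_bigr => i _; rewrite !rmorphXn /=.
congr (_ ^+ _); rewrite !Lr_eval /psum_point split_l split_r !psum_cat /psum.
rewrite !big_cons !big_nil exprNn exprMn /ci /ei; ring.
Qed.

Lemma bf_in f : f \in Ap -> in_Qn (bf f).
Proof. by move=> hf; split; [exact: bf_homog | move=> X Z x; exact: bf_chain]. Qed.


Lemma L_psi r : Lr r \mPo psi = 'X_r.
Proof.
rewrite /Lr comp_mpolyB !comp_mpolyZ !comp_mpolyXU -!(tnth_nth 0) !tnth_mktuple.
by rewrite split_l split_r scaler0 subr0 scalerA mulfV ?ci_neq0 // scale1r.
Qed.

Lemma bf_psi f : bf f \mPo psi = 'X_[mon f].
Proof.
rewrite /bf rmorph_prod mpolyXE_id; apply: eq_bigr => i _.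
by rewrite rmorphXn /= L_psi /mon mnmE.
Qed.

Lemma indep (c : 'I_#|Ap| -> C) :
  \sum_(k < #|Ap|) c k *: bf (enum_val k) = 0 -> forall k, c k = 0.
Proof.
move=> H k0.
have E : (\sum_(k < #|Ap|) c k *: bf (enum_val k)) \mPo psi =
    \sum_(k < #|Ap|) c k *: 'X_[mon (enum_val k)].
  rewrite raddf_sum; apply: eq_bigr => k _; have := comp_mpolyZ (c k) (bf (enum_val k)) psi; rewrite bf_psi => <- //.
rewrite H comp_mpoly0 in E.
have := congr1 (mcoeff (mon (enum_val k0))) E.
rewrite mcoeff0 raddf_sum (bigD1 k0) //= mcoeffZ mcoeffX eqxx mulr1 big1 ?addr0 //.
move=> k ne; rewrite mcoeffZ mcoeffX; case: eqP => [e|]; last by rewrite mulr0.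
by move/mon_inj/enum_val_inj: e => e; rewrite e eqxx in ne.
Qed.

Definition pairs (xs : seq C) : seq C := flatten [seq [:: x; - x] | x <- xs].

Lemma chain_iter (v : {mpoly C[n + n]})
  (H : forall X Z x, QNM v (X ++ [:: x; - x]) (Z ++ [:: 'i * x]) = QNM v X Z) xs :
  forall X Z, QNM v (X ++ pairs xs) (Z ++ map ( *%R 'i) xs) = QNM v X Z.
Proof.
elim: xs => [|x xs IH] X Z /=; first by rewrite !cats0.
have -> : X ++ [:: x, - x & pairs xs] = (X ++ [:: x; - x]) ++ pairs xs by rewrite -catA.
have -> : Z ++ 'i * x :: map ( *%R 'i) xs = (Z ++ [:: 'i * x]) ++ map ( *%R 'i) xs by rewrite -catA.
by rewrite IH H.
Qed.

Lemma psum_pairs k (xs : seq C) : psum k (pairs xs) = (1 + (-1) ^+ k) * psum k xs.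
Proof.
elim: xs => [|x xs IH]; first by rewrite /psum !big_nil mulr0.
move: IH; rewrite /psum /= !big_cons => ->; rewrite (exprNn x); ring.
Qed.

Lemma psum_map k (xs : seq C) : psum k (map ( *%R 'i) xs) = 'i ^+ k * psum k xs.
Proof. by rewrite /psum big_map mulr_sumr; apply: eq_bigr => x _; rewrite exprMn. Qed.

Lemma invar v : in_Qn v -> forall y, v.@[y] = v.@[fun j => match split j with
  | inl r => (ci r)^-1 * (ci r * y (lshift n r) - ei r * y (rshift n r))
  | inr _ => 0 end].
Proof.
move=> [_ H] y.
pose sel (g : 'I_n -> C) k := if insub k.-1 is Some r then g r else 0.
have selE g (r : 'I_n) : sel g r.+1 = g r by rewrite /sel /= valK.
have hr (r : 'I_n) : (0 < r.+1 <= n)%N by rewrite ltn_ord.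
have [X HX] := psum_surj n (sel (fun r => y (lshift n r))).
have [Z HZ] := psum_surj n (sel (fun r => y (rshift n r))).
have [xs Hx] := psum_surj n (sel (fun r => - y (rshift n r) / ci r)).
transitivity (QNM v X Z).
  rewrite /QNM; apply: meval_eq => j; rewrite -[j]splitK /psum_point.
  case: (split j) => r /=; [rewrite split_l HX ?selE // | rewrite split_r HZ ?selE //].
rewrite -(chain_iter v H xs X Z) /QNM; apply: meval_eq => j; rewrite -[j]splitK /psum_point.
have cn := ci_neq0.
case: (split j) => r /=; rewrite ?split_l ?split_r psum_cat.
  rewrite psum_pairs HX ?Hx // !selE /ei; move: (cn r); rewrite /ci => cnr; by field.
rewrite psum_map HZ ?Hx // !selE; move: (cn r); rewrite /ci => cnr; by field.
Qed.

Lemma span v : in_Qn v ->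
  exists c : 'I_#|Ap| -> C, v = \sum_(k < #|Ap|) c k *: bf (enum_val k).
Proof.
move=> hv; have [hom _] := hv.
pose r := v \mPo psi.
have hpsi j : homw (fun i : 'I_n => i.+1) (tnth psi j) (var_weight j).
  rewrite tnth_mktuple /var_weight; case: (split j) => a; last exact: homw0.
  by apply: homwZ; apply: homwX.
have hr : homw (fun i : 'I_n => i.+1) r n.
  rewrite /r comp_mpolyEX; apply: homw_sum => m hm; apply: homwZ; rewrite comp_mpolyX.
  have := @homw_prod _ _ _ _ (index_enum 'I_(n + n)) _ (fun j => m j * var_weight j)%N
    (fun j => homwXn (e := m j) (hpsi j)).
  suff -> : (\sum_(j <- index_enum _) m j * var_weight j)%N = n by [].
  by rewrite -[RHS](hom m hm); apply: eq_bigr => j _; rewrite mulnC.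
have hv' : v = r \mPo Lt.
  apply/eqP; rewrite -subr_eq0; apply/eqP; apply: zero_mpoly => y.
  rewrite mevalB comp_mpoly_meval /r comp_mpoly_meval (invar v hv y); apply/eqP.
  rewrite subr_eq0; apply/eqP; apply: meval_eq => j; rewrite tnth_mktuple.
  case: (split j) => a; last by rewrite meval0.
  by rewrite mevalZ mevalXU tnth_mktuple Lr_eval.
have hrE : r = \sum_(f in Ap) r@_(mon f) *: 'X_[mon f].
  apply/mpolyP => m.
  have -> : (\sum_(f in Ap) r@_(mon f) *: 'X_[mon f])@_m =
      \sum_(f in Ap) r@_(mon f) * (mon f == m)%:R.
    rewrite raddf_sum; apply: eq_bigr => f _.
    by have := mcoeffZ (r@_(mon f)) 'X_[mon f] m; rewrite mcoeffX => <-.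
  case: (boolP (m \in msupp r)) => hm.
    have hw := hr m hm.
    have hle i : (m i < n.+1)%N.
      rewrite ltnS -{2}hw /wdg (bigD1 i) //=; apply: leq_trans (leq_addr _ _).
      by rewrite leq_pmull.
    pose f0 : T := [ffun i => inord (m i)].
    have hf0 : mon f0 = m by apply/mnmP => i; rewrite /mon mnmE ffunE inordK.
    have Af0 : f0 \in Ap.
      rewrite unfold_in /Ap; apply/eqP; rewrite -[RHS]hw /wdg.
      by apply: eq_bigr => i _; rewrite ffunE inordK.
    rewrite (bigD1 f0) //= hf0 eqxx mulr1 big1 ?addr0 // => f /andP [_ ne].
    case: eqP => e; last by rewrite mulr0.
    by rewrite -hf0 in e; rewrite (mon_inj _ _ e) eqxx in ne.
  rewrite (memN_msupp_eq0 hm) big1 // => f _; case: eqP => [e|]; last by rewrite mulr0.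
  by rewrite e (memN_msupp_eq0 hm) mul0r.
exists (fun k => r@_(mon (enum_val k))).
rewrite {1}hv' {1}hrE big_enum_val /= raddf_sum; apply: eq_bigr => k _.
apply: etrans (comp_mpolyZ _ _ _) _; rewrite comp_mpolyX /bf; congr (_ *: _); apply: eq_bigr => i _.
by rewrite tnth_mktuple /mon mnmE.
Qed.

Lemma card_gen : (#|Ap|)%:Z = gen_coef n.
Proof.
rewrite /gen_coef big_add1 /= big_mkord bigA_distr_bigA /= coef_sum.
under eq_bigr do rewrite prodrXr coefXn.
rewrite -[Posz #|Ap|]natz -sum1_card natr_sum [LHS]big_mkcond /=; apply: eq_bigr => f _.
by rewrite -topredE /= /Ap eq_sym; case: eqP.
Qed.

End Main.

Theorem theorem5 (C : numClosedFieldType) (n : nat) :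
  exists d : nat, has_dim (@in_Qn C n) d /\ (d%:Z = gen_coef n).
Proof.
exists #|Ap n|; split; last exact: card_gen.
exists (fun k => bf C n (enum_val k)); split; [|split].
- by move=> k; apply: bf_in; exact: enum_valP.
- exact: (indep C n).
- exact: (span C n).
Qed.
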